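(* Let $(V_m)_{m\ge1}$ be a sequence of positive numbers which is subadditive, i.e. $V_{m+n}\le V_m+V_n$ for all $m,n\ge1$. Then \[ \sum_{i\ge1}\frac{V_{2^i}^2}{2^i}\le 65\sum_{k\ge1}\frac{V_k^2}{k^2}. \] *)

(* Defs.v *)
From mathcomp Require Import all_boot all_order all_algebra.
From mathcomp Require Import all_classical all_reals all_analysis.

(* Main.v *)
Require Import Defs.
From mathcomp Require Import all_boot all_order all_algebra.
From mathcomp Require Import all_classical all_reals all_analysis.
From mathcomp Require Import ring lra zify.
Import Order.TTheory GRing.Theory Num.Theory.
Local Open Scope ring_scope.

Section Fin.
Variables (R : realType) (V : nat -> R).
Hypothesis Vpos : forall m : nat, (1 <= m)%N -> (0 < V m)%R.
Hypothesis Vsub : forall m n : nat, (1 <= m)%N -> (1 <= n)%N -> (V (m + n)%N <= V m + V n)%R.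

Definition Qs n := \sum_(0 <= k < n) V k.+1 ^+ 2.
Definition As n := \sum_(0 <= k < n) V k.+1 ^+ 2 / (k.+1)%:R ^+ 2.
Definition Ps N := \sum_(1 <= i < N.+1) V (2 ^ i)%N ^+ 2 / (2 ^ i)%:R.
Definition Xs N := Qs (2 ^ N) / ((2 ^ N)%:R ^+ 2).

Lemma Qs_ge0 n : 0 <= Qs n.
Proof. by rewrite /Qs; apply: sumr_ge0 => i _; apply: sqr_ge0. Qed.

Lemma L2 N : V (2 ^ N.+1)%N ^+ 2 * ((2 ^ N.+1)%N.-1)%:R <= 4 * Qs (2 ^ N.+1).
Proof.
set L := (2 ^ N.+1)%N.-1.
have hM : (2 ^ N.+1 = L.+1)%N by rewrite /L prednK // expn_gt0.
have step : forall k, (k < L)%N ->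
   V (2 ^ N.+1)%N ^+ 2 <= 2 * V k.+1 ^+ 2 + 2 * V (L - k) ^+ 2.
  move=> k kL.
  have e : (2 ^ N.+1 = k.+1 + (L - k))%N by lia.
  have h1 : (1 <= L - k)%N by lia.
  have := Vsub k.+1 (L - k) isT h1; rewrite -e => hv.
  have p0 := Vpos k.+1 isT.
  have p1 := Vpos _ h1.
  have p2 : 0 < V (2 ^ N.+1)%N by apply: Vpos; rewrite expn_gt0.
  have hsq : V (2 ^ N.+1)%N * V (2 ^ N.+1)%N <= (V k.+1 + V (L - k)) * (V k.+1 + V (L - k)).
    by apply: ler_pM => //; apply: ltW.
  have hd := sqr_ge0 (V k.+1 - V (L - k)).
  rewrite !expr2 in hd *. nra.
have hs : \sum_(0 <= k < L) V (2 ^ N.+1)%N ^+ 2 <=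
   \sum_(0 <= k < L) (2 * V k.+1 ^+ 2 + 2 * V (L - k) ^+ 2).
  by apply: ler_sum_nat => k /andP[_ kL]; apply: step.
rewrite big_split /= -!mulr_sumr in hs.
have rev : \sum_(0 <= k < L) V (L - k) ^+ 2 = \sum_(0 <= k < L) V k.+1 ^+ 2.
  rewrite big_nat_rev /= add0n; apply: eq_big_nat => k /andP[_ kL].
  by congr (V _ ^+ 2); lia.
rewrite rev sumr_const_nat subn0 in hs.
have hQ : Qs (2 ^ N.+1) = \sum_(0 <= k < L) V k.+1 ^+ 2 + V L.+1 ^+ 2.
  by rewrite /Qs hM big_nat_recr.
rewrite hQ mulrC -mulr_natl; rewrite mulr_natl.
nra.
Qed.

Lemma L1 N : Qs (2 ^ N.+1) <= Qs (2 ^ N) + ((2 ^ N.+1)%:R ^+ 2) * (As (2 ^ N.+1) - As (2 ^ N)).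
Proof.
have le : (2 ^ N <= 2 ^ N.+1)%N by rewrite leq_exp2l.
rewrite /Qs /As (@big_cat_nat _ _ _ (2 ^ N) 0 (2 ^ N.+1) _ _ (leq0n _) le) /=.
rewrite (@big_cat_nat _ _ _ (2 ^ N) 0 (2 ^ N.+1) _ _ (leq0n _) le) /=.
rewrite addrAC subrr add0r lerD2l mulr_sumr.
apply: ler_sum_nat => k /andP[_ kL].
have d0 : 0 < (k.+1)%:R ^+ 2 :> R by rewrite exprn_gt0 // ltr0n.
rewrite mulrA ler_pdivlMr // mulrC.
apply: ler_wpM2r; first exact: sqr_ge0.
rewrite -!natrX ler_nat leq_exp2r //.
Qed.

Lemma Xs_ge0 N : 0 <= Xs N.
Proof. by rewrite /Xs divr_ge0 ?Qs_ge0 ?sqr_ge0. Qed.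

Lemma inv_main N : 3 * Ps N + 8 * Xs N <= 32 * As (2 ^ N).
Proof.
elim: N => [|N IH].
  rewrite /Ps /Xs /Qs /As big_geq // expn0 !big_nat1.
  have : 0 <= V 1 ^+ 2 / ((1%N)%:R ^+ 2) :> R by rewrite divr_ge0 ?sqr_ge0.
  lra.
set m : R := (2 ^ N)%:R.
have m1 : 1 <= m by rewrite /m ler1n expn_gt0.
have e2 : (2 ^ N.+1)%:R = 2 * m :> R by rewrite expnS natrM.
have h2 := L2 N.
have h1 := L1 N.
have hpred : ((2 ^ N.+1)%N.-1)%:R = 2 * m - 1 :> R.
  have hp : (0 < 2 ^ N.+1)%N by rewrite expn_gt0.
  by rewrite -e2 -{2}(prednK hp) -natr1 addrK.
rewrite hpred in h2; rewrite e2 in h1.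
have hP : Ps N.+1 = Ps N + V (2 ^ N.+1)%N ^+ 2 / (2 * m).
  by rewrite /Ps big_nat_recr //= e2.
have hX : Xs N.+1 = Qs (2 ^ N.+1) / (2 * m) ^+ 2 by rewrite /Xs e2.
rewrite hP.
set Q2 := Qs (2 ^ N.+1) in h1 h2 hX.
set v := V (2 ^ N.+1)%N ^+ 2 in h2 *.
have v0 : 0 <= v by apply: sqr_ge0.
have mp : 0 < m by lra.
have t8 : v / (2 * m) <= 8 * Xs N.+1.
  have hv : v * (2 * m) <= 8 * Q2 by nra.
  rewrite hX mulrA (_ : v / (2 * m) = (v * (2 * m)) / (2 * m) ^+ 2); last by field; lra.
  apply: ler_wpM2r => //; rewrite invr_ge0; apply: sqr_ge0.
have y4 : Xs N.+1 <= Xs N / 4 + (As (2 ^ N.+1) - As (2 ^ N)).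
  rewrite hX /Xs -/m.
  have hinv : 0 <= ((2 * m) ^+ 2)^-1 by rewrite invr_ge0; apply: sqr_ge0.
  have q := ler_wpM2r hinv h1.
  rewrite [X in _ <= X](_ : _ = (Qs (2 ^ N) + (2 * m) ^+ 2 * (As (2 ^ N.+1) - As (2 ^ N))) / (2 * m) ^+ 2).
    exact: q.
  field; lra.
lra.
Qed.
End Fin.

Local Open Scope ereal_scope.

Theorem lemma1 (R : realType) (V : nat -> R)
  (Vpos : forall m : nat, (1 <= m)%N -> (0 < V m)%R)
  (Vsub : forall m n : nat, (1 <= m)%N -> (1 <= n)%N -> (V (m + n)%N <= V m + V n)%R) :
  \sum_(1 <= i <oo) ((V (2 ^ i)%N) ^+ 2 / (2 ^ i)%:R)%:E
    <= 65%:E * \sum_(1 <= k <oo) ((V k) ^+ 2 / (k%:R) ^+ 2)%:E.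
Proof.
have f0 : forall i, (1 <= i)%N -> true -> 0 <= ((V (2 ^ i)%N) ^+ 2 / (2 ^ i)%:R)%:E.
  by move=> i _ _; rewrite lee_fin divr_ge0 ?sqr_ge0 ?ler0n.
have a0 : forall i, (1 <= i)%N -> true -> 0 <= ((V i) ^+ 2 / (i%:R) ^+ 2)%:E.
  by move=> i _ _; rewrite lee_fin divr_ge0 ?sqr_ge0.
apply: lime_le; first exact: is_cvg_nneseries f0.
apply: nearW => n.
have As0 : forall k, (0 <= As R V k)%R.
  by move=> k; rewrite /As; apply: sumr_ge0 => i _; rewrite divr_ge0 ?sqr_ge0.
have hP : (\sum_(1 <= i < n) (V (2 ^ i)%N ^+ 2 / (2 ^ i)%:R) <= Ps R V n)%R.
  case: n => [|n]; first by rewrite /Ps !big_geq.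
  rewrite /Ps (big_nat_recr n.+1) //= lerDl divr_ge0 ?sqr_ge0 ?ler0n //.
have hI := @inv_main R V Vpos Vsub n.
have hX := Xs_ge0 R V n.
have hA := As0 (2 ^ n)%N.
have h11 : (\sum_(1 <= i < n) (V (2 ^ i)%N ^+ 2 / (2 ^ i)%:R) <= 11 * As R V (2 ^ n))%R.
  lra.
have eA : (As R V (2 ^ n) = \sum_(1 <= k < (2 ^ n).+1) (V k ^+ 2 / k%:R ^+ 2))%R.
  by rewrite /As big_add1 /=.
rewrite sumEFin; apply: (le_trans (y := (11 * As R V (2 ^ n))%:E)); first by rewrite lee_fin.
rewrite EFinM; apply: (le_trans (y := 65%:E * (As R V (2 ^ n))%:E)).
  by apply: lee_wpmul2r; [rewrite lee_fin | rewrite lee_fin; lra].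
apply: lee_wpmul2l; first by rewrite lee_fin.
rewrite eA -sumEFin.
exact: nneseries_lim_ge a0.
Qed.
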